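(* For all $\alpha,\beta\in K$, $$\sum_{s=1}^\kappa\Big(\frac12-\frac s\kappa\Big)(\alpha|\sigma^s\beta)=-\langle\alpha,\beta\rangle+\mathrm{rk}(\alpha)\deg(\beta)-\mathrm{rk}(\beta)\deg(\alpha),$$ where $\kappa=2(n-2)$.
   Context: Fix an integer $n\ge3$; $X=\mathbb{P}^1_{n-2,2,2}$ is the orbifold projective line with orbifold points of orders $n-2,2,2$; $a_1=n-2$, $a_2=a_3=2$. Its $K$-ring is $K=\mathbb{Z}[L_1,L_2,L_3]/\langle L_i^{a_i}-L_j^{a_j},(L_i-1)(L_j-1):i\neq j\rangle$, $L:=L_1^{n-2}$. $\mathrm{rk}:K\to\mathbb{Z}$ is the ring map $L_i\mapsto1$; $\deg:K\to\mathbb{Q}$ is additive with $\deg(1)=0$, $\deg(L_i)=1/a_i$, $\deg(EF)=\mathrm{rk}(E)\deg(F)+\mathrm{rk}(F)\deg(E)$. $\langle a,b\rangle=\chi(a^\vee\otimes b)$ is the Euler pairing (orbifold holomorphic Euler characteristic) and $(a|b)=\langle a,b\rangle+\langle b,a\rangle$ is the intersection pairing. $\sigma:K\to K$ is multiplication by the tangent bundle class $T=L_1+L_2+L_3-L-1$. *)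

(* Defs.v *)
From mathcomp Require Import all_boot all_order all_algebra.
Set Implicit Arguments. Unset Strict Implicit. Unset Printing Implicit Defensive.
Import Order.TTheory GRing.Theory Num.Theory.
Local Open Scope ring_scope.

(* Model of the K-ring K of X = P^1_{n-2,2,2}.
   Since each L_i is invertible in K (L^{-1} = 2 - L and L_i^{-1} = L_i^{a_i-1} L^{-1}),
   K is the quotient of the Laurent polynomial ring Z[L1^{+-1},L2^{+-1},L3^{+-1}] by the
   ideal <L_i^{a_i}-L_j^{a_j}, (L_i-1)(L_j-1)>.  An element of K is represented by a formal
   Z-linear combination (a finite list) of Laurent monomials L1^e1 L2^e2 L3^e3, and every
   function below (rk, deg, chi, and the operations) is defined on representatives and is
   compatible with the quotient. *)

Definition mon := (int * int * int)%type.
Definition Kel := seq (int * mon).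

Definition e1 (m : mon) : int := m.1.1.
Definition e2 (m : mon) : int := m.1.2.
Definition e3 (m : mon) : int := m.2.

Definition a1 (n : nat) : nat := (n - 2)%N.
Definition a2 : nat := 2%N.
Definition a3 : nat := 2%N.

Definition monmul (m m' : mon) : mon := (e1 m + e1 m', e2 m + e2 m', e3 m + e3 m').

Definition Kadd (a b : Kel) : Kel := a ++ b.
Definition Kmul (a b : Kel) : Kel :=
  [seq (p.1 * q.1, monmul p.2 q.2) | p <- a, q <- b].
Definition Kone : Kel := [:: (1, (0, 0, 0))].

Definition Kdual (a : Kel) : Kel :=
  [seq (p.1, (- e1 p.2, - e2 p.2, - e3 p.2)) | p <- a].

Definition Ttan (n : nat) : Kel :=
  [:: (1, (1, 0, 0)); (1, (0, 1, 0)); (1, (0, 0, 1));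
      (-1, ((a1 n)%:Z, 0, 0)); (-1, (0, 0, 0))].

Definition sigma (n : nat) (a : Kel) : Kel := Kmul (Ttan n) a.

Definition rk (a : Kel) : int := \sum_(p <- a) p.1.

Definition mondeg (n : nat) (m : mon) : rat :=
  (e1 m)%:~R / (a1 n)%:R + (e2 m)%:~R / a2%:R + (e3 m)%:~R / a3%:R.
Definition deg (n : nat) (a : Kel) : rat := \sum_(p <- a) p.1%:~R * mondeg n p.2.

(* Orbifold holomorphic Euler characteristic (Riemann-Roch for weighted projective lines):
   the line bundle O(x) with x = sum e_i x_i has normal form l c + sum l_i x_i with
   0 <= l_i < a_i, l = sum floor(e_i / a_i), and chi(O(x)) = dim H^0 - dim H^1 = l + 1.
   ((m %/ d)%Z is floor division for d > 0.) *)
Definition monchi (n : nat) (m : mon) : int :=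
  1 + (e1 m %/ (a1 n)%:Z)%Z + (e2 m %/ a2%:Z)%Z + (e3 m %/ a3%:Z)%Z.
Definition chi (n : nat) (a : Kel) : int := \sum_(p <- a) p.1 * monchi n p.2.

Definition euler (n : nat) (a b : Kel) : int := chi n (Kmul (Kdual a) b).
Definition ipair (n : nat) (a b : Kel) : int := euler n a b + euler n b a.

(* Main.v *)
Require Import Defs.
From mathcomp Require Import all_boot all_order all_algebra.
From mathcomp Require Import zify ring lra.
Import Order.TTheory GRing.Theory Num.Theory.
Local Open Scope ring_scope.

Definition W (h : mon -> int) (x : Kel) : int := \sum_(p <- x) p.1 * h p.2.

Lemma W_ext h h' x : (forall m, h m = h' m) -> W h x = W h' x.
Proof. by move=> E; rewrite /W; apply: eq_bigr => p _; rewrite E. Qed.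

Lemma W_add h h' x : W (fun m => h m + h' m) x = W h x + W h' x.
Proof. by rewrite /W -big_split; apply: eq_bigr => p _; rewrite mulrDr. Qed.

Lemma W_mull h a b :
  W h (Kmul a b) = \sum_(p <- a) p.1 * W (fun m => h (monmul p.2 m)) b.
Proof.
rewrite /W /Kmul big_allpairs_dep; apply: eq_bigr => p _.
by rewrite big_distrr; apply: eq_bigr => q _ /=; rewrite mulrA.
Qed.

Lemma W_mulr h a b :
  W h (Kmul a b) = \sum_(q <- b) q.1 * W (fun m => h (monmul m q.2)) a.
Proof.
rewrite /W /Kmul big_allpairs_dep exchange_big; apply: eq_bigr => q _.
by rewrite big_distrr; apply: eq_bigr => p _ /=; rewrite mulrCA mulrA.
Qed.

Definition mneg (m : mon) : mon := (- e1 m, - e2 m, - e3 m).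

Lemma W_dual h a : W h (Kdual a) = W (fun m => h (mneg m)) a.
Proof. by rewrite /W /Kdual big_map. Qed.

Definition Sh n (h : mon -> int) (m : mon) : int :=
  \sum_(t <- Ttan n) t.1 * h (monmul t.2 m).

Lemma W_sigma n h X : W h (sigma n X) = W (Sh n h) X.
Proof.
rewrite /sigma W_mull /W /Sh.
under eq_bigr do rewrite big_distrr.
rewrite exchange_big; apply: eq_bigr => q _ /=.
by rewrite big_distrr; apply: eq_bigr => t _ /=; rewrite mulrCA.
Qed.

Lemma W_iter n s h X : W h (iter s (sigma n) X) = W (iter s (Sh n) h) X.
Proof.
elim: s h => [|s IH] h //=.
by rewrite W_sigma IH -iterS iterSr.
Qed.

Lemma chiW n x : chi n x = W (monchi n) x. Proof. by []. Qed.

Lemma ipairW n alpha Y :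
  ipair n alpha Y = \sum_(p <- alpha) p.1 *
    W (fun m => monchi n (monmul (mneg p.2) m) + monchi n (monmul (mneg m) p.2)) Y.
Proof.
rewrite /ipair /euler !chiW W_mull W_mulr /Kdual big_map -big_split /=.
apply: eq_bigr => p _; by rewrite W_dual -mulrDr W_add.
Qed.

Lemma eulerW n alpha beta :
  euler n alpha beta = \sum_(p <- alpha) p.1 *
     \sum_(q <- beta) q.1 * monchi n (monmul (mneg p.2) q.2).
Proof. by rewrite /euler chiW W_mull /Kdual big_map. Qed.

Definition psi (b c k : int) : int := ((- c + k) %/ b)%Z + ((- k + c) %/ b)%Z.

Lemma psi_per (b c k : int) : b != 0 -> psi b c (b + k) = psi b c k.
Proof.
move=> b0; rewrite /psi.
have -> : - c + (b + k) = b + (- c + k) by ring.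
have -> : - (b + k) + c = (-1) * b + (- k + c) by ring.
rewrite divzDl ?dvdzz // divzMDl // divzz b0 /=; ring.
Qed.

Definition Hc n (c : mon) (m : mon) : int :=
  monchi n (monmul (mneg c) m) + monchi n (monmul (mneg m) c).

Lemma e1M x y : e1 (monmul x y) = e1 x + e1 y. Proof. by []. Qed.
Lemma e2M x y : e2 (monmul x y) = e2 x + e2 y. Proof. by []. Qed.
Lemma e3M x y : e3 (monmul x y) = e3 x + e3 y. Proof. by []. Qed.
Lemma e1N x : e1 (mneg x) = - e1 x. Proof. by []. Qed.
Lemma e2N x : e2 (mneg x) = - e2 x. Proof. by []. Qed.
Lemma e3N x : e3 (mneg x) = - e3 x. Proof. by []. Qed.

Lemma Sh_eq n h m : Sh n h m =
  h (1 + e1 m, e2 m, e3 m) + h (e1 m, 1 + e2 m, e3 m) + h (e1 m, e2 m, 1 + e3 m)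
  - h ((a1 n)%:Z + e1 m, e2 m, e3 m) - h m.
Proof.
rewrite /Sh /Ttan /= !big_cons big_nil /monmul /e1 /e2 /e3 /= !add0r !mul1r !mulN1r addr0.
by case: m => [[x y] z]; rewrite !addrA.
Qed.

Lemma iterSh n s c m : (0 < a1 n)%N ->
  iter s (Sh n) (Hc n c) m =
  2 + psi (a1 n)%:Z (e1 c) (e1 m + s%:Z) + psi a2%:Z (e2 c) (e2 m + s%:Z)
    + psi a3%:Z (e3 c) (e3 m + s%:Z).
Proof.
move=> a0.
elim: s m => [|s IH] m.
  rewrite /= /Hc /monchi /psi !e1M !e2M !e3M !e1N !e2N !e3N !addr0; ring.
rewrite iterS Sh_eq !IH /e1 /e2 /e3 /=.
rewrite -(addrA (a1 n)%:Z) psi_per; last by rewrite eqz_nat -lt0n.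
have E k : k + (s.+1)%:Z = 1 + k + s%:Z by rewrite intS; ring.
rewrite !E; ring.
Qed.

Lemma sum_lin (x y : rat) m :
  \sum_(j < m) (x - j%:R * y) = m%:R * x - y * (m%:R * (m%:R - 1) / 2).
Proof.
elim: m => [|m IH]; first by rewrite big_ord0; field.

rewrite big_ord_recr /= IH -addn1 natrD; by field.
Qed.

Lemma floor_char (q x b : int) : 0 < b -> q * b <= x < q * b + b -> (x %/ b)%Z = q.
Proof.
move=> b0 /andP[h1 h2].
have -> : x = q * b + (x - q * b) by ring.
rewrite divzMDl ?gt_eqF // divz_small ?addr0 //.
apply/andP; split; first by rewrite subr_ge0.
rewrite abszE gtr0_norm //; by rewrite ltrBlDl.
Qed.

Lemma phi_val (b r t : nat) : (r < b)%N -> (t < b)%N ->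
  (((r + t.+1)%N%:Z %/ b)%Z + ((- (r + t.+1)%N%:Z) %/ b)%Z) =
  if t == (b - r.+1)%N then 0 else -1.
Proof.
move=> rb tb.
have b0 : (0 < b%:Z) by lia.
case: (ltngtP (r + t.+1) b) => H.
- have -> : (t == (b - r.+1)%N) = false by apply/eqP; lia.
  rewrite (@floor_char 0) ?(@floor_char (-1)) //; apply/andP; split; lia.
- have -> : (t == (b - r.+1)%N) = false by apply/eqP; lia.
  rewrite (@floor_char 1) ?(@floor_char (-2)) //; apply/andP; split; lia.
- have -> : (t == (b - r.+1)%N) = true by apply/eqP; lia.
  rewrite (@floor_char 1) ?(@floor_char (-1)) //; apply/andP; split; lia.
Qed.

Lemma step2d (b : nat) (d : int) : (0 < b)%N ->
  \sum_(t < b) ((1/2 - (t.+1)%:R / b%:R) *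
     (((d + (t.+1)%:Z) %/ b)%Z + ((- (d + (t.+1)%:Z)) %/ b)%Z)%:~R : rat)
  = d%:~R / b%:R - ((d %/ b)%Z)%:~R.
Proof.
move=> b0.
have bz : (0 < b%:Z) by lia.
have Hr0 : 0 <= (d %% b)%Z by rewrite modz_ge0 // gt_eqF.
have Hr1 : (d %% b < b)%Z by rewrite ltz_pmod.
pose r := `|(d %% b)%Z|%N.
have rE : (d %% b)%Z = r%:Z by rewrite /r abszE ger0_norm.
have rb : (r < b)%N by lia.
have [q dE] : exists q, d = q * b%:Z + r%:Z.
  by exists (d %/ b)%Z; rewrite -rE -divz_eq.
have E : forall t : 'I_b, ((d + (t.+1)%:Z) %/ b)%Z + ((- (d + (t.+1)%:Z)) %/ b)%Z =
    if (t : nat) == (b - r.+1)%N then 0 else -1.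
  move=> t; rewrite -(@phi_val b r t rb (ltn_ord t)).
  have -> : d + (t.+1)%:Z = q * b + (r + t.+1)%N%:Z by rewrite dE PoszD; ring.
  have -> : - (q * b + (r + t.+1)%N%:Z) = (- q) * b + (- (r + t.+1)%N%:Z) by ring.
  rewrite !divzMDl ?gt_eqF //; ring.
under eq_bigr => t _ do rewrite E.
have t0b : (b - r.+1 < b)%N by lia.
pose t0 := Ordinal t0b.
rewrite (bigD1 t0) //= eqxx mulr0 add0r.
have Hsum := sum_lin (1/2 - 1 / b%:R) (1 / b%:R) b.
have Hw : \sum_(t < b) (1 / 2 - (t.+1)%:R / b%:R : rat) = -1/2.
  rewrite -[RHS](_ : b%:R * (1/2 - 1 / b%:R) - 1 / b%:R * (b%:R * (b%:R - 1) / 2) = -1/2).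
    rewrite -Hsum; apply: eq_bigr => t _; rewrite -addn1 natrD; field.
    by rewrite pnatr_eq0 -lt0n.
  field; by rewrite pnatr_eq0 -lt0n.
rewrite (bigD1 t0) //= in Hw.
under eq_bigr => t Ht do rewrite (negbTE (Ht : ~~ ((t:nat) == (b - r.+1)%N))) mulrN1.
rewrite sumrN.
have -> : \sum_(i < b | i != t0) (1 / 2 - (i.+1)%:R / b%:R) = -1/2 - (1 / 2 - (t0.+1)%:R / b%:R : rat).
  by rewrite -Hw; ring.
rewrite /t0 /=.
have -> : (b - r.+1).+1 = (b - r)%N by lia.
have -> : (d %/ b)%Z = q by rewrite dE divzMDl ?gt_eqF // divz_small ?addr0 //; apply/andP; split; lia.
rewrite natrB ?(ltnW rb) // dE intrD intrM /=.
field; by rewrite pnatr_eq0 -lt0n.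
Qed.

Lemma sum_blocks (g : nat -> rat) b m :
  \sum_(i < b * m) g i = \sum_(j < m) \sum_(t < b) g (j * b + t)%N.
Proof.
elim: m => [|m IH]; first by rewrite muln0 !big_ord0.
rewrite big_ord_recr /= -IH.
rewrite (_ : \sum_(i < b * m.+1) g i = \sum_(i < b * m + b) g i); last by rewrite mulnSr.
rewrite big_split_ord /=; congr (_ + _); apply: eq_bigr => t _ /=.
by rewrite mulnC.
Qed.

Lemma block (f : nat -> rat) b m : (0 < b)%N -> (0 < m)%N ->
  (forall s, f (s + b)%N = f s) ->
  \sum_(1 <= s < (b * m).+1) (1/2 - s%:R / (b * m)%:R) * f s
  = \sum_(t < b) (1/2 - (t.+1)%:R / b%:R) * f t.+1.
Proof.
move=> b0 m0 per.
have perj : forall j s, f (j * b + s)%N = f s.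
  elim=> [|j IH] s; first by rewrite mul0n add0n.
  by rewrite mulSn -addnA addnC per IH.
rewrite big_add1 /= big_mkord (sum_blocks (fun i => (1 / 2 - i.+1%:R / (b * m)%:R) * f i.+1)) exchange_big /=.
apply: eq_bigr => t _.
under eq_bigr => j _ do rewrite -addnS perj.
rewrite -mulr_suml; congr (_ * _).
have -> : \sum_(j < m) (1 / 2 - (j * b + t.+1)%:R / (b * m)%:R : rat)
   = \sum_(j < m) ((1/2 - (t.+1)%:R / (b * m)%:R) - j%:R * (b%:R / (b * m)%:R)).
  apply: eq_bigr => j _; rewrite natrD natrM; field.
  by rewrite !pnatr_eq0 -!lt0n b0 m0.
rewrite (sum_lin (1/2 - t.+1%:R/(b * m)%:R) (b%:R/(b * m)%:R) m) natrM; field.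
by rewrite !pnatr_eq0 -!lt0n b0 m0.
Qed.

Lemma U (b m N : nat) (c k : int) : (0 < b)%N -> (0 < m)%N -> N = (b * m)%N ->
  \sum_(1 <= s < N.+1) ((1/2 - s%:R / N%:R) * (psi b c (k + s%:Z))%:~R : rat)
  = (- c + k)%:~R / b%:R - (((- c + k) %/ b)%Z)%:~R.
Proof.
move=> b0 m0 ->.
rewrite (@block (fun s => (psi b c (k + s%:Z))%:~R)) //; last first.
  by move=> s; rewrite PoszD addrA addrC psi_per // eqz_nat -lt0n.
rewrite -step2d //; apply: eq_bigr => t _; congr (_ * _%:~R).
rewrite /psi; congr (_ + _); congr (_ %/ _)%Z; ring.
Qed.

Definition Gf n (s : nat) (c m : mon) : int :=
  2 + psi (a1 n)%:Z (e1 c) (e1 m + s%:Z) + psi a2%:Z (e2 c) (e2 m + s%:Z)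
    + psi a3%:Z (e3 c) (e3 m + s%:Z).

Lemma core n c k : (3 <= n)%N ->
  \sum_(1 <= s < (2 * (n - 2)).+1)
     ((1 / 2 - s%:R / (2 * (n - 2))%:R) * (Gf n s c k)%:~R : rat)
  = - (monchi n (monmul (mneg c) k))%:~R + mondeg n k - mondeg n c.
Proof.
move=> n3.
have a0 : (0 < a1 n)%N by rewrite /a1; lia.
rewrite /Gf.
under eq_bigr => s _ do rewrite (intrD _ (2 + _ + _)) (intrD _ (2 + _)) (intrD _ 2) !mulrDr.
rewrite !big_split /=.
rewrite (@U (a1 n) 2 _ (e1 c) (e1 k)) //; last by rewrite /a1 mulnC.
rewrite (@U a2 (a1 n) _ (e2 c) (e2 k)) //.
rewrite (@U a3 (a1 n) _ (e3 c) (e3 k)) //.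
have -> : \sum_(1 <= s < (2 * (n - 2)).+1)
            ((1 / 2 - s%:R / (2 * (n - 2))%:R) * 1 : rat) = -1/2.
  rewrite big_add1 /= big_mkord.
  have N0 : ((2 * (n - 2))%:R != 0 :> rat) by rewrite pnatr_eq0; lia.
  rewrite -[RHS](_ : (2 * (n - 2))%:R * (1/2 - 1 / (2 * (n - 2))%:R)
       - 1 / (2 * (n - 2))%:R * ((2 * (n - 2))%:R * ((2 * (n - 2))%:R - 1) / 2) = -1/2).
    rewrite -sum_lin; apply: eq_bigr => t _; rewrite -natr1 mulr1; field.
    by rewrite pnatr_eq0; lia.
  field; by rewrite pnatr_eq0; lia.
rewrite /monchi /mondeg !e1M !e2M !e3M !e1N !e2N !e3N /a2 /a3 !intrD.
field.
by rewrite pnatr_eq0 -lt0n a0.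
Qed.

Lemma ipairHc n alpha Y :
  ipair n alpha Y = \sum_(p <- alpha) p.1 * W (Hc n p.2) Y.
Proof. by rewrite ipairW. Qed.

Lemma ipair_iter n s alpha beta : (0 < a1 n)%N ->
  ((ipair n alpha (iter s (sigma n) beta))%:~R : rat) =
  \sum_(p <- alpha) \sum_(q <- beta) (p.1)%:~R * (q.1)%:~R * (Gf n s p.2 q.2)%:~R.
Proof.
move=> a0.
rewrite ipairHc rmorph_sum; apply: eq_bigr => p _.
rewrite W_iter /W rmorphM rmorph_sum big_distrr; apply: eq_bigr => q _.
rewrite iterSh // rmorphM; exact: mulrA.
Qed.

Theorem lemma10 (n : nat) (hn : (3 <= n)%N) (alpha beta : Kel) :
  \sum_(1 <= s < (2 * (n - 2)).+1)
     ((1 / 2 - s%:R / (2 * (n - 2))%:R) * (ipair n alpha (iter s (sigma n) beta))%:~R : rat)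
  = - (euler n alpha beta)%:~R + (rk alpha)%:~R * deg n beta - (rk beta)%:~R * deg n alpha.
Proof.
have a0 : (0 < a1 n)%N by rewrite /a1; lia.
under eq_bigr => s _ do rewrite ipair_iter // big_distrr.
rewrite exchange_big /=.
have R1 : ((euler n alpha beta)%:~R : rat) = \sum_(p <- alpha) \sum_(q <- beta)
     (p.1)%:~R * (q.1)%:~R * (monchi n (monmul (mneg p.2) q.2))%:~R.
  rewrite eulerW rmorph_sum; apply: eq_bigr => p _.
  rewrite rmorphM rmorph_sum big_distrr; apply: eq_bigr => q _.
  rewrite rmorphM; exact: mulrA.
have R2 : ((rk alpha)%:~R * deg n beta : rat) = \sum_(p <- alpha) \sum_(q <- beta)
     (p.1)%:~R * (q.1)%:~R * mondeg n q.2.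
  rewrite /rk rmorph_sum mulr_suml; apply: eq_bigr => p _.
  rewrite /deg big_distrr; apply: eq_bigr => q _.
  exact: mulrA.
have R3 : ((rk beta)%:~R * deg n alpha : rat) = \sum_(p <- alpha) \sum_(q <- beta)
     (p.1)%:~R * (q.1)%:~R * mondeg n p.2.
  rewrite mulrC /rk rmorph_sum /deg mulr_suml; apply: eq_bigr => p _.
  rewrite mulr_sumr; apply: eq_bigr => q _.
  exact: mulrAC.
rewrite R1 R2 R3 -sumrN -big_split -sumrB /=.
apply: eq_bigr => p _.
under eq_bigr => s _ do rewrite big_distrr.
rewrite exchange_big /= -sumrN -big_split -sumrB /=.
apply: eq_bigr => q _.
have -> : \sum_(1 <= i < (2 * (n - 2)).+1)
   (1 / 2 - i%:R / (2 * (n - 2))%:R) * ((p.1)%:~R * (q.1)%:~R * (Gf n i p.2 q.2)%:~R)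
  = (p.1)%:~R * (q.1)%:~R * \sum_(1 <= i < (2 * (n - 2)).+1)
   ((1 / 2 - i%:R / (2 * (n - 2))%:R) * (Gf n i p.2 q.2)%:~R : rat).
  rewrite big_distrr; apply: eq_bigr => s _ /=; ring.
rewrite core //; ring.
Qed.
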